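(* Let $\mathcal{Y}_u=\{y_1,\dots,y_L\}$ be a finite set of (unseen test) class labels, and let $\mathbf{A}$ be a label–attribute matrix assigning to each label $y\in\mathcal{Y}_u$ a binary attribute vector $\mathbf{a}_y\in\{0,1\}^{N_a}$, where the vectors $\mathbf{a}_y$, $y\in\mathcal{Y}_u$, are pairwise distinct. Let $f^{(1)},\dots,f^{(N_a)}$ be binary attribute classifiers (e.g. trained on a training set $D_s$), and write $f(x)=(f^{(1)}(x),\dots,f^{(N_a)}(x))\in\{0,1\}^{N_a}$. Each input $x$ is classified by assigning it a label $\hat y(x)\in\mathcal{Y}_u$ whose attribute vector is closest to $f(x)$, i.e. $d(f(x),\mathbf{a}_{\hat y(x)})\le d(f(x),\mathbf{a}_{y})$ for all $y\in\mathcal{Y}_u$ (ties broken arbitrarily). Let $D_u=\{(x_i,y_i): i=1,\dots,N_u\}$ with $y_i\in\mathcal{Y}_u$ be a test set, and for each $m=1,\dots,N_a$ let $B_m\ge 0$ be an upper bound on the prediction loss of the $m$-th attribute classifier, i.e. $\frac{1}{N_u}\sum_{i=1}^{N_u}\Delta\big(f^{(m)}(x_i),\mathbf{a}_{y_i}^{(m)}\big)\le B_m$. Set $\bar B=\frac{1}{N_a}\sum_{m=1}^{N_a}B_m$. Then the generalization error rate $k/N_u$, where $k=\#\{i:\hat y(x_i)\neq y_i\}$ is the number of misclassified test samples, satisfies $$\frac{k}{N_u}\le \frac{2N_a\bar B}{\tau}.$$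
   Context: For binary values $a,b$, $\Delta(a,b)=1$ if $a\neq b$ and $0$ otherwise. For vectors $\mathbf{u},\mathbf{v}\in\{0,1\}^{N_a}$ with $m$-th entries $\mathbf{u}^{(m)},\mathbf{v}^{(m)}$, the generalized attribute distance is the Hamming distance $d(\mathbf{u},\mathbf{v})=\sum_{m=1}^{N_a}\Delta(\mathbf{u}^{(m)},\mathbf{v}^{(m)})$. The minimum attribute distance of $\mathbf{A}$ is $\tau=\min_{y\neq y'}d(\mathbf{a}_y,\mathbf{a}_{y'})$, the minimum over pairs of distinct labels $y,y'\in\mathcal{Y}_u$ (so $\tau\ge 1$). *)

(* Defs.v *)
From mathcomp Require Import all_boot all_order all_algebra.
Set Implicit Arguments. Unset Strict Implicit. Unset Printing Implicit Defensive.
Import Order.TTheory GRing.Theory Num.Theory.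

Definition Delta (a b : bool) : nat := (a != b).

Definition attr_dist (Na : nat) (u v : {ffun 'I_Na -> bool}) : nat :=
  \sum_(m < Na) Delta (u m) (v m).

Definition is_min_attr_dist (Y : finType) (Na : nat)
  (A : Y -> {ffun 'I_Na -> bool}) (t : nat) : Prop :=
  (exists y y' : Y, y != y' /\ attr_dist (A y) (A y') = t) /\
  (forall y y' : Y, y != y' -> t <= attr_dist (A y) (A y'))%N.

(* Main.v *)
Require Import Defs.
From mathcomp Require Import all_boot all_order all_algebra.
From mathcomp Require Import zify ring lra.
Import Order.TTheory GRing.Theory Num.Theory.
Local Open Scope ring_scope.

Lemma Delta_tri a b c : (Delta a c <= Delta a b + Delta b c)%N.
Proof. by case: a; case: b; case: c. Qed.

Lemma Delta_sym a b : Delta a b = Delta b a.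
Proof. by rewrite /Delta eq_sym. Qed.

Lemma dist_tri n (u v w : {ffun 'I_n -> bool}) :
  (attr_dist u w <= attr_dist u v + attr_dist v w)%N.
Proof.
rewrite /attr_dist -big_split /=; apply: leq_sum => m _; exact: Delta_tri.
Qed.

Lemma dist_sym n (u v : {ffun 'I_n -> bool}) : attr_dist u v = attr_dist v u.
Proof. by apply: eq_bigr => m _; rewrite Delta_sym. Qed.

Theorem theorem1 (R : realFieldType) (Y : finType) (X : Type) (Na Nu : nat)
  (A : Y -> {ffun 'I_Na -> bool}) (f : X -> {ffun 'I_Na -> bool})
  (yhat : X -> Y) (xs : 'I_Nu -> X) (ys : 'I_Nu -> Y) (B : 'I_Na -> R)
  (tau : nat) :
  (1 < #|Y|)%N ->
  injective A ->
  is_min_attr_dist A tau ->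
  (forall x y, (attr_dist (f x) (A (yhat x)) <= attr_dist (f x) (A y))%N) ->
  (0 < Nu)%N ->
  (forall m, 0 <= B m) ->
  (forall m, (\sum_(i < Nu) (Delta (f (xs i) m) (A (ys i) m))%:R) / Nu%:R <= B m) ->
  let Bbar := (\sum_(m < Na) B m) / Na%:R in
  let k := #|[set i : 'I_Nu | yhat (xs i) != ys i]| in
  k%:R / Nu%:R <= 2 * Na%:R * Bbar / tau%:R.
Proof.
move=> _ injA [[y0 [y0' [ne0 d0]]] tmin] opt Nupos B0 HB; cbv zeta.
set Bbar := (\sum_(m < Na) B m) / Na%:R.
set k := #|[set i : 'I_Nu | yhat (xs i) != ys i]|.
have taupos : (0 < tau)%N.
  rewrite lt0n; apply/negP => /eqP t0.
  move: d0; rewrite t0 /attr_dist => /eqP; rewrite sum_nat_eq0 => /forallP H.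
  move/negP: ne0; apply; apply/eqP/injA/ffunP => m.
  by move: (H m) => /implyP /(_ isT); rewrite /Delta eqb0 negbK => /eqP.
have Napos : (0 < Na)%N.
  case: (ltnP 0 Na) => // h; move: taupos; rewrite -d0 /attr_dist big1 // => m _.
  have := ltn_ord m; lia.
set D := fun i m => Delta (f (xs i) m) (A (ys i) m).
have key : (tau * k <= 2 * \sum_(m < Na) \sum_(i < Nu) D i m)%N.
  rewrite exchange_big /= big_distrr /= mulnC -sum_nat_const.
  apply: (@leq_trans (\sum_(i in [set i : 'I_Nu | yhat (xs i) != ys i]) (2 * \sum_(m < Na) D i m))%N).
    2: by rewrite [X in (_ <= X)%N](bigID (mem [set i : 'I_Nu | yhat (xs i) != ys i])) /= leq_addr.
  apply: leq_sum => i; rewrite inE => hne.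
  apply: (leq_trans (tmin _ _ hne)).
  apply: (leq_trans (@dist_tri _ (A (yhat (xs i))) (f (xs i)) (A (ys i)))).
  rewrite (@dist_sym _ (A _)).
  have := opt (xs i) (ys i).
  have -> : attr_dist (f (xs i)) (A (ys i)) = (\sum_(m < Na) D i m)%N by [].
  lia.
have HB' m : (\sum_(i < Nu) D i m)%:R <= Nu%:R * B m.
  have := HB m; rewrite ler_pdivrMr ?ltr0n //.
  by rewrite natr_sum mulrC.
have S : (\sum_(m < Na) \sum_(i < Nu) D i m)%:R <= Nu%:R * \sum_(m < Na) B m.
  rewrite natr_sum mulr_sumr; apply: ler_sum => m _; exact: HB'.
have keyR : (tau%:R * k%:R : R) <= 2 * (Nu%:R * \sum_(m < Na) B m).
  rewrite -natrM; apply: (le_trans (y := (2 * \sum_(m < Na) \sum_(i < Nu) D i m)%N%:R)).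
    by rewrite ler_nat.
  by rewrite natrM; apply: ler_wpM2l.
have -> : 2 * Na%:R * Bbar = 2 * \sum_(m < Na) B m.
  rewrite /Bbar; field; by rewrite pnatr_eq0 -lt0n.
rewrite ler_pdivrMr ?ltr0n //.
rewrite mulrAC ler_pdivlMr ?ltr0n //.
have hNu : (0 : R) < Nu%:R by rewrite ltr0n.
have ht : (0 : R) < tau%:R by rewrite ltr0n.
nra.
Qed.
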